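(* Let $\mathcal{A}$ be an abelian category with an amplitude $\alpha$. Then for all $A,B\in\operatorname{ob}\mathcal{A}$, \[ |\alpha(A)-\alpha(B)|\le\mathrm{d}_\alpha(A,B), \] i.e. $\alpha$ is $1$-Lipschitz with respect to the path metric $\mathrm{d}_\alpha$.
   Context: An amplitude on an abelian category $\mathcal{A}$ is a function $\alpha\colon\operatorname{ob}\mathcal{A}\to[0,\infty]$ with $\alpha(0)=0$ such that for every short exact sequence $0\to A\to B\to C\to0$, $\alpha(A)\le\alpha(B)$, $\alpha(C)\le\alpha(B)$ and $\alpha(B)\le\alpha(A)+\alpha(C)$. The cost of a zigzag $A\xleftarrow{\gamma_1}C_1\xrightarrow{\gamma_2}\cdots\xleftarrow{\gamma_{n-1}}C_n\xrightarrow{\gamma_n}B$ is $\sum_i\alpha(\ker\gamma_i)+\alpha(\operatorname{coker}\gamma_i)$; the path metric $\mathrm{d}_\alpha(A,B)$ is the infimum of costs over all zigzags between $A$ and $B$ ($\inf\emptyset=\infty$). *)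

(* Defs.v *)
From HB Require Import structures.
From mathcomp Require Import all_boot all_order all_algebra.
From mathcomp Require Import boolp classical_sets reals constructive_ereal ereal.
Set Implicit Arguments.
Unset Strict Implicit.
Unset Printing Implicit Defensive.
Import Order.TTheory GRing.Theory Num.Theory.
Local Open Scope ring_scope.

Record preadditive := Preadditive {
  Obj : Type;
  Hom : Obj -> Obj -> zmodType;
  comp : forall X Y Z, Hom Y Z -> Hom X Y -> Hom X Z;
  idm : forall X, Hom X X;
  comp_assoc : forall W X Y Z (h : Hom Y Z) (g : Hom X Y) (f : Hom W X),
      comp h (comp g f) = comp (comp h g) f;
  comp_id_l : forall X Y (f : Hom X Y), comp (idm Y) f = f;
  comp_id_r : forall X Y (f : Hom X Y), comp f (idm X) = f;
  comp_addl : forall X Y Z (g1 g2 : Hom Y Z) (f : Hom X Y),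
      comp (g1 + g2) f = comp g1 f + comp g2 f;
  comp_addr : forall X Y Z (g : Hom Y Z) (f1 f2 : Hom X Y),
      comp g (f1 + f2) = comp g f1 + comp g f2
}.
Arguments comp {p X Y Z}.
Arguments Hom {p}.
Arguments idm {p}.

Section CatDefs.
Variable C : preadditive.

Definition is_zero_obj (Z : Obj C) : Prop :=
  (forall X (f g : Hom (p:=C) X Z), f = g) /\ (forall X (f g : Hom (p:=C) Z X), f = g).

Definition is_mono X Y (f : Hom (p:=C) X Y) : Prop :=
  forall W (g h : Hom (p:=C) W X), comp f g = comp f h -> g = h.

Definition is_epi X Y (f : Hom (p:=C) X Y) : Prop :=
  forall W (g h : Hom (p:=C) Y W), comp g f = comp h f -> g = h.

Definition is_kernel X Y (f : Hom (p:=C) X Y) (K : Obj C) (k : Hom (p:=C) K X) : Prop :=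
  comp f k = 0 /\
  forall W (g : Hom (p:=C) W X), comp f g = 0 ->
    exists u : Hom (p:=C) W K, comp k u = g /\ forall u', comp k u' = g -> u' = u.

Definition is_cokernel X Y (f : Hom (p:=C) X Y) (Q : Obj C) (q : Hom (p:=C) Y Q) : Prop :=
  comp q f = 0 /\
  forall W (g : Hom (p:=C) Y W), comp g f = 0 ->
    exists u : Hom (p:=C) Q W, comp u q = g /\ forall u', comp u' q = g -> u' = u.

Definition is_biproduct X Y (S : Obj C) (i1 : Hom (p:=C) X S) (i2 : Hom (p:=C) Y S)
  (p1 : Hom (p:=C) S X) (p2 : Hom (p:=C) S Y) : Prop :=
  [/\ comp p1 i1 = idm X, comp p2 i2 = idm Y, comp p1 i2 = 0, comp p2 i1 = 0
    & comp i1 p1 + comp i2 p2 = idm S].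
End CatDefs.

Record abelian := Abelian {
  abcat :> preadditive;
  ker_obj : forall X Y (f : Hom (p:=abcat) X Y), Obj abcat;
  ker_map : forall X Y (f : Hom (p:=abcat) X Y), Hom (p:=abcat) (ker_obj f) X;
  ker_spec : forall X Y (f : Hom (p:=abcat) X Y), is_kernel f (ker_map f);
  coker_obj : forall X Y (f : Hom (p:=abcat) X Y), Obj abcat;
  coker_map : forall X Y (f : Hom (p:=abcat) X Y), Hom (p:=abcat) Y (coker_obj f);
  coker_spec : forall X Y (f : Hom (p:=abcat) X Y), is_cokernel f (coker_map f);
  has_zero_obj : exists Z : Obj abcat, @is_zero_obj abcat Z;
  has_biproducts : forall X Y, exists S i1 i2 p1 p2,
      @is_biproduct abcat X Y S i1 i2 p1 p2;
  mono_normal : forall X Y (f : Hom (p:=abcat) X Y), is_mono f ->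
      exists Z (g : Hom (p:=abcat) Y Z), is_kernel g f;
  epi_normal : forall X Y (f : Hom (p:=abcat) X Y), is_epi f ->
      exists Z (g : Hom (p:=abcat) Z X), is_cokernel g f
}.

Section Amplitude.
Variable R : realType.
Variable A : abelian.
Local Open Scope ereal_scope.

Definition short_exact X Y Z (f : Hom (p:=A) X Y) (g : Hom (p:=A) Y Z) : Prop :=
  is_kernel g f /\ is_cokernel f g.

Definition is_amplitude (alpha : Obj A -> \bar R) : Prop :=
  [/\ forall X, 0 <= alpha X,
      forall Z : Obj A, @is_zero_obj A Z -> alpha Z = 0 &
      forall X Y Z (f : Hom (p:=A) X Y) (g : Hom (p:=A) Y Z), short_exact f g ->
        [/\ alpha X <= alpha Y, alpha Z <= alpha Y
          & alpha Y <= alpha X + alpha Z]].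

Inductive zigzag : Obj A -> Obj A -> Type :=
| zz_nil X : zigzag X X
| zz_fwd X Y Z (f : Hom (p:=A) X Y) (p : zigzag Y Z) : zigzag X Z
| zz_bwd X Y Z (f : Hom (p:=A) Y X) (p : zigzag Y Z) : zigzag X Z.

Definition arrow_cost (alpha : Obj A -> \bar R) X Y (f : Hom (p:=A) X Y) : \bar R :=
  alpha (ker_obj f) + alpha (coker_obj f).

Fixpoint zz_cost (alpha : Obj A -> \bar R) X Z (p : zigzag X Z) : \bar R :=
  match p with
  | zz_nil _ => 0
  | zz_fwd _ _ _ f q => arrow_cost alpha f + zz_cost alpha q
  | zz_bwd _ _ _ f q => arrow_cost alpha f + zz_cost alpha q
  end.

(* path metric: infimum of costs (inf of the empty set is +oo) *)
Definition path_metric (alpha : Obj A -> \bar R) (X Y : Obj A) : \bar R :=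
  ereal_inf [set zz_cost alpha p | p in [set: zigzag X Y]].
End Amplitude.

(* Main.v *)
Require Import Defs.
From mathcomp Require Import all_boot all_order all_algebra.
From mathcomp Require Import boolp classical_sets reals constructive_ereal ereal.
Import Order.TTheory GRing.Theory Num.Theory.
Section Aux.
Variable A : abelian.
Local Open Scope ring_scope.

Lemma comp0l X Y Z (f : Defs.Hom (p:=A) X Y) : Defs.comp (0 : Defs.Hom (p:=A) Y Z) f = 0%R.
Proof.
have := Defs.comp_addl (0 : Defs.Hom (p:=A) Y Z) 0 f.
rewrite GRing.addr0 => /eqP; rewrite -subr_eq subrr => /eqP <-. by [].
Qed.

Lemma comp0r X Y Z (g : Defs.Hom (p:=A) Y Z) : Defs.comp g (0 : Defs.Hom (p:=A) X Y) = 0%R.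
Proof.
have := Defs.comp_addr g (0 : Defs.Hom (p:=A) X Y) 0.
rewrite GRing.addr0 => /eqP; rewrite -subr_eq subrr => /eqP <-. by [].
Qed.

Lemma ker_mono {X Y} {f : Defs.Hom (p:=A) X Y} {K} {k : Defs.Hom (p:=A) K X} :
  is_kernel f k -> is_mono k.
Proof.
move=> [fk0 H] W g h e.
have h0 : Defs.comp f (Defs.comp k g) = 0%R by rewrite Defs.comp_assoc fk0 comp0l.
have [u [_ Hu]] := H W (Defs.comp k g) h0.
by rewrite (Hu g erefl) (Hu h (esym e)).
Qed.

Lemma coker_epi {X Y} {f : Defs.Hom (p:=A) X Y} {Q} {q : Defs.Hom (p:=A) Y Q} :
  is_cokernel f q -> is_epi q.
Proof.
move=> [qf0 H] W g h e.
have h0 : Defs.comp (Defs.comp g q) f = 0%R by rewrite -Defs.comp_assoc qf0 comp0r.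
have [u [_ Hu]] := H W (Defs.comp g q) h0.
by rewrite (Hu g erefl) (Hu h (esym e)).
Qed.

Lemma coker_of_ker I Y Q (i : Defs.Hom (p:=A) I Y) (q : Defs.Hom (p:=A) Y Q) :
  is_epi q -> is_kernel q i -> is_cokernel i q.
Proof.
move=> eq [qi0 Hi]; have [Z [g [qg0 Hg]]] := epi_normal eq.
have [v [iv _]] := Hi _ g qg0.
split => // W w wi0.
apply: Hg; by rewrite -iv Defs.comp_assoc wi0 comp0l.
Qed.

Lemma mono_comp {X Y Z} {g : Defs.Hom (p:=A) Y Z} {f : Defs.Hom (p:=A) X Y} :
  is_mono g -> is_mono f -> is_mono (Defs.comp g f).
Proof.
move=> mg mf W u v e; apply: mf; apply: mg; by rewrite !Defs.comp_assoc.
Qed.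

Lemma epi_of_zero X Y (e : Defs.Hom (p:=A) X Y) :
  (forall W (u : Defs.Hom (p:=A) Y W), Defs.comp u e = 0%R -> u = 0%R) -> is_epi e.
Proof.
move=> H W g h geh.
have := Defs.comp_addl (g - h) h e; rewrite subrK geh => /eqP.
rewrite -subr_eq subrr eq_sym => /eqP /H /eqP; rewrite subr_eq0 => /eqP //.
Qed.

Lemma factor_epi X Y (f : Defs.Hom (p:=A) X Y)
  (e : Defs.Hom (p:=A) X (ker_obj (coker_map f))) :
  Defs.comp (ker_map (coker_map f)) e = f -> is_epi e.
Proof.
move=> ief.
set q := coker_map f; set i := ker_map q.
have [qi0 Hi] := ker_spec q.
have [qf0 Hq] := coker_spec f.
have mi : is_mono i := ker_mono (ker_spec q).
set c := coker_map e; set m := ker_map c.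
have [cm0 Hm] := ker_spec c.
have [ce0 Hc] := coker_spec e.
have [e' [me' _]] := Hm _ e ce0.
have mm : is_mono m := ker_mono (ker_spec c).
have [Z [g [gim Hg]]] := mono_normal (mono_comp mi mm).
have gf0 : Defs.comp g f = 0%R.
  by rewrite -ief -me' Defs.comp_assoc Defs.comp_assoc -(Defs.comp_assoc g) gim !comp0l.
have [t [tq _]] := Hq _ g gf0.
have gi0 : Defs.comp g i = 0%R by rewrite -tq -Defs.comp_assoc qi0 comp0r.
have [s [ims _]] := Hg _ i gi0.
have ms : Defs.comp m s = idm _.
  apply: mi; by rewrite Defs.comp_assoc ims Defs.comp_id_r.
have c0 : c = 0%R by rewrite -(Defs.comp_id_r c) -ms Defs.comp_assoc cm0 comp0l.
apply: epi_of_zero => W u ue0.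
have [v [vc _]] := Hc _ u ue0.
by rewrite -vc -/c c0 comp0r.
Qed.

End Aux.
Arguments ker_mono {A X Y f K k}.
Arguments coker_epi {A X Y f Q q}.
Arguments coker_of_ker {A I Y Q i q}.
Arguments factor_epi {A X Y f e}.

Local Open Scope ereal_scope.
Section Aux2.
Variable A : abelian.

Lemma arrow_ineq (R : realType) (alpha : Obj A -> \bar R) :
  is_amplitude alpha -> forall X Y (f : Defs.Hom (p:=A) X Y),
  alpha X <= alpha Y + arrow_cost alpha f /\ alpha Y <= alpha X + arrow_cost alpha f.
Proof.
move=> [a0 _ aex] X Y f.
set q := coker_map f; set i := ker_map q.
have [qi0 Hi] := ker_spec q.
have [qf0 Hq] := coker_spec f.
have mi : is_mono i := ker_mono (ker_spec q).
have [e [ief _]] := Hi _ f qf0.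
have ee := factor_epi ief.
set k := ker_map f.
have [fk0 Hk] := ker_spec f.
have kek : is_kernel e k.
  split.
    apply: mi; by rewrite Defs.comp_assoc ief fk0 comp0r.
  move=> W g eg0; apply: Hk; by rewrite -ief -Defs.comp_assoc eg0 comp0r.
have se1 : short_exact k e by split => //; apply: coker_of_ker.
have se2 : short_exact i q.
  split; first exact: ker_spec.
  apply: coker_of_ker => //; exact: coker_epi (coker_spec f).
have [_ h1 h2] := aex _ _ _ _ _ se1.
have [h3 _ h4] := aex _ _ _ _ _ se2.
rewrite /arrow_cost; split.
- apply: (le_trans h2).
  rewrite (addeC (alpha Y)) -addeA; apply: leeD => //.
  apply: (le_trans h3); exact: leeDr.
- apply: (le_trans h4).
  rewrite addeA; apply: leeD2r.
  apply: (le_trans h1); rewrite addeC; exact: leeDr.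
Qed.

Lemma zz_ineq (R : realType) (alpha : Obj A -> \bar R) :
  is_amplitude alpha -> forall (X Z : Obj A) (p : zigzag X Z),
  alpha X <= alpha Z + zz_cost alpha p /\ alpha Z <= alpha X + zz_cost alpha p.
Proof.
move=> amp X Z p; elim: p => {X Z} [X | X Y Z f p [IH1 IH2] | X Y Z f p [IH1 IH2]] /=.
- by rewrite adde0.
- have [h1 h2] := @arrow_ineq R alpha amp _ _ f; split.
  + apply: (le_trans h1); apply: (le_trans (leeD2r _ IH1)).
    by rewrite -addeA (addeC (zz_cost _ _)).
  + apply: (le_trans IH2); apply: (le_trans (leeD2r _ h2)).
    by rewrite /arrow_cost !addeA.
- have [h1 h2] := @arrow_ineq R alpha amp _ _ f; split.
  + apply: (le_trans h2); apply: (le_trans (leeD2r _ IH1)).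
    by rewrite -addeA (addeC (zz_cost _ _)).
  + apply: (le_trans IH2); apply: (le_trans (leeD2r _ h1)).
    by rewrite /arrow_cost !addeA.
Qed.

Lemma inf_step (R : realType) (a b : \bar R) (S : set (\bar R)) :
  (0 <= b) -> (forall c, S c -> 0 <= c) ->
  (forall c, S c -> a <= b + c) -> a <= b + ereal_inf S.
Proof.
move=> b0 S0 H.
have i0 : 0 <= ereal_inf S by apply/ereal_infP.
case: b b0 H => [r | | ] // b0 H.
- rewrite -leeBlDl //; apply/ereal_infP => c Sc.
  rewrite leeBlDl //; exact: H.
- rewrite addye ?leey //.
  by apply/negP => /eqP inf0; move: i0; rewrite inf0.
Qed.

Lemma cost_ge0 (R : realType) (alpha : Obj A -> \bar R) :
  is_amplitude alpha -> forall (X Z : Obj A) (p : zigzag X Z), 0 <= zz_cost alpha p.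
Proof.
move=> [a0 _ _] X Z p; elim: p => {X Z} [X | X Y Z f p IH | X Y Z f p IH] //=;
  by rewrite /arrow_cost !adde_ge0.
Qed.
End Aux2.

Theorem mainTheorem6 (R : realType) (A : abelian) (alpha : Obj A -> \bar R) :
  is_amplitude alpha ->
  forall X Y : Obj A,
    alpha X <= alpha Y + path_metric alpha X Y /\
    alpha Y <= alpha X + path_metric alpha X Y.
Proof.
move=> amp X Y; have [a0 _ _] := amp.
split; (apply: inf_step; [by [] | move=> c [p _ <-]; exact: (@cost_ge0 A R alpha amp)
  | move=> c [p _ <-]; have [h1 h2] := @zz_ineq A R alpha amp _ _ p; by []]).
Qed.
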